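(* For every integer $\nu\ge0$, $$\operatorname{sech}^5(D/2)\,0^{[2\nu]}=\tfrac43\sinh(D)\,0^{[2\nu+3]},$$ and consequently $$\frac43\sum_{k=0}^{\nu+1}t(2\nu+3,2k+1)=\frac{(2\nu)!}{2^{2\nu}}\binom{-5/2}{\nu}.$$
   Context: Central factorials: $x^{[0]}=1$, $x^{[n]}=x\prod_{j=1}^{n-1}(x+\tfrac n2-j)$ for $n\ge1$; $t(n,k)$ is defined by $x^{[n]}=\sum_k t(n,k)x^k$. For a power series $h(D)=\sum_k h_kD^k$ (the Taylor series at $0$ of the indicated function of $D$), $h(D)\,0^{[n]}:=\sum_k h_k\,k!\,t(n,k)$. *)

(* Defs.v *)
From HB Require Import structures.
From mathcomp Require Import all_boot all_order all_algebra.
Set Implicit Arguments. Unset Strict Implicit. Unset Printing Implicit Defensive.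
Import Order.TTheory GRing.Theory Num.Theory.
Local Open Scope ring_scope.

(* Central factorial x^[n] as a polynomial over rat:
   x^[0] = 1,  x^[n] = x * prod_{j=1}^{n-1} (x + n/2 - j). *)
Definition cfact (n : nat) : {poly rat} :=
  if n is 0%N then 1
  else 'X * \prod_(1 <= j < n) ('X + (n%:R / 2 - j%:R)%:P).

Definition t (n k : nat) : rat := (cfact n)`_k.

Definition series := nat -> rat.

Definition smul (a b : series) : series :=
  fun n => \sum_(i < n.+1) a i * b (n - i)%N.

Definition sone : series := fun n => if n == 0%N then 1 else 0.

Definition spow (a : series) (m : nat) : series := iter m (smul a) sone.

(* multiplicative inverse of a series with a 0 <> 0:
   b_0 = 1/a_0, b_n = -(1/a_0) sum_{i=1}^n a_i b_{n-i} *)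
Fixpoint sinv_seq (a : series) (n : nat) : seq rat :=
  match n with
  | 0%N => [:: (a 0%N)^-1]
  | m.+1 => let s := sinv_seq a m in
            rcons s (- (a 0%N)^-1 *
                       \sum_(1 <= i < m.+2) a i * nth 0 s (m.+1 - i)%N)
  end.

Definition sinv (a : series) : series := fun n => nth 0 (sinv_seq a n) n.

Definition cosh_half : series :=
  fun k => if odd k then 0 else 1 / (2 ^+ k * k`!%:R).

Definition sech5_half : series := spow (sinv cosh_half) 5.

Definition sinh_s : series := fun k => if odd k then 1 / k`!%:R else 0.

(* h(D) 0^[n] := sum_k h_k k! t(n,k); t(n,k) = 0 for k > n so sum over k <= n *)
Definition applyD (h : series) (n : nat) : rat :=
  \sum_(k < n.+1) h k * k`!%:R * t n k.

Definition gbinom (a : rat) (k : nat) : rat :=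
  (\prod_(i < k) (a - i%:R)) / k`!%:R.

(* Main.v *)
Require Import Defs.
From HB Require Import structures.
From mathcomp Require Import all_boot all_order all_algebra.
From mathcomp Require Import ring lra zify.
Import Order.TTheory GRing.Theory Num.Theory.
Local Open Scope ring_scope.
Set Implicit Arguments. Unset Strict Implicit. Unset Printing Implicit Defensive.

Definition eqm (m : nat) (p q : {poly rat}) := exists g, p = q + 'X^m * g.

Lemma eqm_eq m (p q : {poly rat}) : p = q -> eqm m p q.
Proof. by move=> ->; exists 0; rewrite mulr0 addr0. Qed.

Lemma eqm_sym m (p q : {poly rat}) : eqm m p q -> eqm m q p.
Proof. by case=> g ->; exists (- g); ring. Qed.

Lemma eqm_trans m (p q : {poly rat}) r : eqm m p q -> eqm m q r -> eqm m p r.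
Proof. by case=> g -> [h ->]; exists (g + h); ring. Qed.

Lemma eqm_add m (p q : {poly rat}) p' q' : eqm m p q -> eqm m p' q' -> eqm m (p + p') (q + q').
Proof. by case=> g -> [h ->]; exists (g + h); ring. Qed.

Lemma eqm_opp m (p q : {poly rat}) : eqm m p q -> eqm m (- p) (- q).
Proof. by case=> g ->; exists (- g); ring. Qed.

Lemma eqm_mul m (p q : {poly rat}) p' q' : eqm m p q -> eqm m p' q' -> eqm m (p * p') (q * q').
Proof. by case=> g -> [h ->]; exists (g * q' + q * h + 'X^m * g * h); ring. Qed.

Lemma eqm_pow m (p q : {poly rat}) n : eqm m p q -> eqm m (p ^+ n) (q ^+ n).
Proof.
move=> h; elim: n => [|n IH]; first exact: eqm_eq.
by rewrite !exprS; apply: eqm_mul.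
Qed.

Lemma eqm_weak m n (p q : {poly rat}) : (n <= m)%N -> eqm m p q -> eqm n p q.
Proof.
move=> /subnK <- [g ->]; exists ('X^(m - n) * g).
by rewrite exprD; ring.
Qed.

Lemma eqm_deriv m (p q : {poly rat}) : eqm m.+1 p q -> eqm m p^`() q^`().
Proof.
case=> g ->; exists (g *+ m.+1 + 'X * g^`()).
rewrite derivD derivM derivXn /= !exprS; ring.
Qed.

Lemma eqm_coef m (p q : {poly rat}) k : eqm m p q -> (k < m)%N -> p`_k = q`_k.
Proof. by case=> g -> km; rewrite coefD coefXnM km addr0. Qed.

Lemma coef_eqm m (p q : {poly rat}) : (forall k, (k < m)%N -> p`_k = q`_k) -> eqm m p q.
Proof.
move=> H; exists (\poly_(i < size (p - q)) (p - q)`_(i + m)).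
apply/polyP => i; rewrite coefD coefXnM.
have [im|im] := ltnP i m; first by rewrite addr0 H.
rewrite coef_poly subnK //.
have [_|hs] := ltnP (i - m) (size (p - q)); first by rewrite coefB addrC subrK.
have hs' : (size (p - q)%R <= i)%N by exact: (leq_trans hs (leq_subr m i)).
have := nth_default 0 hs'; rewrite coefB => /eqP; rewrite subr_eq0 => /eqP ->.
by rewrite addr0.
Qed.
Definition T (N : nat) (a : series) : {poly rat} := \poly_(i < N) a i.
Definition sder (a : series) : series := fun k => a k.+1 * k.+1%:R.

Lemma T_ext N a b : (forall k, a k = b k) -> T N a = T N b.
Proof. by move=> H; apply/polyP => i; rewrite !coef_poly H. Qed.

Lemma T_smul N a b : eqm N (T N (smul a b)) (T N a * T N b).
Proof.
apply: coef_eqm => k kN; rewrite coef_poly kN coefM /smul.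
apply: eq_bigr => i _; rewrite !coef_poly.
have ik : (i <= k)%N by rewrite -ltnS.
rewrite (leq_ltn_trans ik kN) (leq_ltn_trans (leq_subr i k) kN) //.
Qed.

Lemma T_sone N : eqm N (T N sone) 1.
Proof.
apply: coef_eqm => k kN; rewrite coef_poly kN coefC /sone.
by case: k {kN}.
Qed.

Lemma T_spow N a n : eqm N (T N (spow a n)) (T N a ^+ n).
Proof.
elim: n => [|n IH]; first exact: T_sone.
rewrite exprS /spow iterS -/(spow a n).
apply: eqm_trans (T_smul _ _ _) _.
by apply: eqm_mul => //; apply: eqm_eq.
Qed.

Lemma T_sder N a : T N (sder a) = (T N.+1 a)^`().
Proof.
apply/polyP => i; rewrite coef_deriv !coef_poly ltnS /sder.
by case: ifP => _; rewrite ?mul0rn // mulr_natr.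
Qed.

Lemma T_weak N M a : (M <= N)%N -> eqm M (T N a) (T M a).
Proof.
move=> MN; apply: coef_eqm => k kM; rewrite !coef_poly kM.
by rewrite (leq_trans kM MN).
Qed.

Lemma eqm_const m (p : {poly rat}) : eqm m p^`() 0 -> eqm m.+1 p (p`_0)%:P.
Proof.
move=> h; apply: coef_eqm => k; rewrite coefC.
case: k => [//|j]; rewrite ltnS => jm.
have := eqm_coef h jm; rewrite coef_deriv coef0 /=.
move/eqP; rewrite -mulr_natr mulf_eq0 pnatr_eq0 orbF => /eqP.
done.
Qed.
Lemma size_sinv_seq a n : size (sinv_seq a n) = n.+1.
Proof. by elim: n => //= n IH; rewrite size_rcons IH. Qed.

Lemma nth_sinv_seq a n j : (j <= n)%N -> nth 0 (sinv_seq a n) j = sinv a j.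
Proof.
elim: n j => [|n IH] j; first by rewrite leqn0 => /eqP ->.
rewrite leq_eqVlt => /orP [/eqP -> //|jn].
by rewrite /= nth_rcons size_sinv_seq jn IH.
Qed.

Lemma sinv_rec a m : sinv a m.+1 =
  - (a 0%N)^-1 * \sum_(1 <= i < m.+2) a i * sinv a (m.+1 - i)%N.
Proof.
rewrite /sinv /= nth_rcons size_sinv_seq ltnn eqxx.
congr (_ * _); apply: eq_big_nat => i /andP [i1 _].
by rewrite nth_sinv_seq // leq_subLR -add1n leq_add2r.
Qed.

Lemma smul_sinv a n : a 0%N != 0 -> smul a (sinv a) n = sone n.
Proof.
move=> a0; rewrite /smul /sone; case: n => [|m].
  by rewrite big_ord1 /sinv /= mulfV.
rewrite big_ord_recl /= subn0 sinv_rec mulrA mulrN mulfV // mulN1r.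
rewrite big_add1 /= big_mkord.
by rewrite addrC subrr.
Qed.
Lemma eqm_r m (p q q' : {poly rat}) : eqm m p q -> q = q' -> eqm m p q'.
Proof. by move=> h <-. Qed.
Lemma eqm_l m (p p' q : {poly rat}) : p = p' -> eqm m p q -> eqm m p' q.
Proof. by move=> <-. Qed.

Lemma deriv1' : (1 : {poly rat})^`() = 0.
Proof. by rewrite -polyC1 derivC. Qed.
Lemma derivn' n : (n%:R : {poly rat})^`() = 0.
Proof. by rewrite -polyC_natr derivC. Qed.

Lemma eqm_mulc m (p q c : {poly rat}) : eqm m p q -> eqm m (p * c) (q * c).
Proof. by move=> h; apply: eqm_mul => //; apply: eqm_eq. Qed.
Lemma eqm_cmul m (p q c : {poly rat}) : eqm m p q -> eqm m (c * p) (c * q).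
Proof. by move=> h; apply: eqm_mul => //; apply: eqm_eq. Qed.

Lemma key_poly m (C S : {poly rat}) r :
  eqm m.+2 (C * S) 1 -> eqm m (C^`()^`() * 4%:R) C -> C`_0 = 1 -> C`_1 = 0 ->
  eqm m ((S ^+ r)^`()^`() * 4%:R)
        (S ^+ r * (r%:R ^+ 2) - S ^+ r.+2 * (r%:R * r.+1%:R)).
Proof.
move=> h1 h2 c0 c1.
set D := C^`().
have h1' : eqm m.+1 (C * S) 1 by apply: eqm_weak h1.
have ha : eqm m.+1 (D * S + C * S^`()) 0.
  by have := eqm_deriv h1; rewrite derivM deriv1'.
have hb : eqm m.+1 S^`() (- (D * S ^+ 2)).
  have e1 : eqm m.+1 S^`() (S^`() * (C * S)).
    by apply: eqm_sym; apply: eqm_r (eqm_cmul _ h1') _; rewrite mulr1.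
  apply: eqm_trans e1 _.
  have e2 : eqm m.+1 (S * (D * S + C * S^`()) - D * S ^+ 2) (S * 0 - D * S ^+ 2).
    by apply: eqm_add; [apply: eqm_cmul|apply: eqm_eq].
  apply: eqm_l (eqm_r e2 _); [ring | ring].
have hc : forall n, eqm m.+1 (S ^+ n)^`() (- (D * S ^+ n.+1) * n%:R).
  case=> [|n]; first by apply: eqm_eq; rewrite expr0 deriv1' mulr0.
  rewrite deriv_exp /= -mulr_natr.
  apply: eqm_r (eqm_mulc _ (eqm_mulc _ hb)) _.
  by rewrite !exprS; ring.
have e3 := eqm_deriv (hc r).
have e4 : eqm m ((- (D * S ^+ r.+1) * r%:R)^`())
     (- (D^`() * S ^+ r.+1 + D * (- (D * S ^+ r.+2) * r.+1%:R)) * r%:R).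
  rewrite derivM derivN derivM derivn' mulr0 addr0.
  apply: eqm_mulc; apply: eqm_opp; apply: eqm_add; first exact: eqm_eq.
  by apply: eqm_cmul; apply: eqm_weak (hc r.+1).
have hF : eqm m.+1 (C * C - D * D * 4%:R) 1.
  have hF' : eqm m (C * C - D * D * 4%:R)^`() 0.
    rewrite derivB !derivM derivn' mulr0 addr0.
    have e5 : eqm m (D * C + C * D - (D^`() * D + D * D^`()) * 4%:R)
                    (D * C + C * D - (D * (D^`() * 4%:R) + D * (D^`() * 4%:R))).
      by apply: eqm_eq; ring.
    apply: eqm_trans e5 _.
    have e6 := eqm_cmul D h2.
    apply: eqm_r (eqm_add (eqm_eq m (erefl (D * C + C * D))) (eqm_opp (eqm_add e6 e6))) _.
    ring.
  apply: eqm_r (eqm_const hF') _.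
  by rewrite coefB !coef0M c0 /D coef_deriv c1 mul0rn !mul0r subr0 mulr1.
have e7 : eqm m ((S ^+ r)^`()^`() * 4%:R)
   (- (D^`() * 4%:R * S ^+ r.+1 - (D * D * 4%:R) * S ^+ r.+2 * r.+1%:R) * r%:R).
  apply: eqm_r (eqm_mulc _ (eqm_trans e3 e4)) _; ring.
apply: eqm_trans e7 _.
have e8 : eqm m (- (D^`() * 4%:R * S ^+ r.+1 - (D * D * 4%:R) * S ^+ r.+2 * r.+1%:R) * r%:R)
   (- (C * S ^+ r.+1 - (C * C - 1) * S ^+ r.+2 * r.+1%:R) * r%:R).
  apply: eqm_mulc; apply: eqm_opp; apply: eqm_add.
    by apply: eqm_mulc.
  apply: eqm_opp; apply: eqm_mulc; apply: eqm_mulc.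
  have hF2 : eqm m.+1 (D * D * 4%:R) (C * C - 1).
    by apply: eqm_l (eqm_add (eqm_eq m.+1 (erefl (C * C))) (eqm_opp hF)); ring.
  exact: eqm_weak (leqnSn m) hF2.
apply: eqm_trans e8 _.
have e9 : eqm m (- (C * S ^+ r.+1 - (C * C - 1) * S ^+ r.+2 * r.+1%:R) * r%:R)
   (- ((C * S) * S ^+ r - (C * S) ^+ 2 * S ^+ r * r.+1%:R
       + S ^+ r.+2 * r.+1%:R) * r%:R).
  by apply: eqm_eq; rewrite !exprS; ring.
apply: eqm_trans e9 _.
have h1m : eqm m (C * S) 1 by apply: eqm_weak h1; apply: leqW.
have e10 := eqm_mulc (r%:R) (eqm_opp (eqm_add (eqm_add (eqm_mulc (S ^+ r) h1m)
   (eqm_opp (eqm_mulc (r.+1%:R) (eqm_mulc (S ^+ r) (eqm_pow 2 h1m)))))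
   (eqm_eq m (erefl (S ^+ r.+2 * r.+1%:R))))).
apply: eqm_r e10 _.
rewrite -[r.+1]addn1 natrD !exprS; ring.
Qed.
Definition sS := sinv cosh_half.

Lemma cosh0 : cosh_half 0%N = 1.
Proof. by rewrite /cosh_half /= expr0 mul1r divr1. Qed.

Lemma cosh1 : cosh_half 1%N = 0.
Proof. by []. Qed.

Lemma cosh_dd k : sder (sder cosh_half) k * 4%:R = cosh_half k.
Proof.
rewrite /sder /cosh_half /= negbK; case: (odd k); first by rewrite !mul0r.
rewrite !factS !natrM !exprS.
have h2 : (2 ^+ k : rat) != 0 by apply: expf_neq0.
have hf : (k`!%:R : rat) != 0 by rewrite pnatr_eq0 -lt0n fact_gt0.
rewrite -[k.+2]addn2 -[k.+1]addn1 !natrD.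
field; rewrite h2 hf /=.
have hk : (0 : rat) <= k%:R := ler0n _ _.
by apply/andP; split; apply/negP => /eqP; lra.
Qed.

Lemma H_dd r k :
  sder (sder (spow sS r)) k * 4%:R =
  spow sS r k * r%:R ^+ 2 - spow sS r.+2 k * (r%:R * r.+1%:R).
Proof.
set M := k.+1.
set C := T M.+2 cosh_half; set S := T M.+2 sS.
have h1 : eqm M.+2 (C * S) 1.
  apply: eqm_trans (eqm_sym (T_smul _ _ _)) _.
  apply: eqm_trans (T_sone M.+2).
  by apply: eqm_eq; apply: T_ext => n; rewrite smul_sinv // cosh0 oner_neq0.
have h2 : eqm M (C^`()^`() * 4%:R) C.
  rewrite /C -!T_sder; apply: coef_eqm => j jM.
  rewrite mulr_natr coefMn !coef_poly jM -mulr_natr cosh_dd.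
  by rewrite (leq_trans jM) // leqW.
have c0 : C`_0 = 1 by rewrite coef_poly /= cosh0.
have c1 : C`_1 = 0 by rewrite coef_poly /= cosh1.
have K := key_poly r h1 h2 c0 c1.
have hr : forall n, eqm M.+2 (T M.+2 (spow sS n)) (S ^+ n) by move=> n; apply: T_spow.
have K2 : eqm M ((T M.+2 (spow sS r))^`()^`() * 4%:R) ((S ^+ r)^`()^`() * 4%:R).
  by apply: eqm_mulc; do 2 apply: eqm_deriv.
have K3 := eqm_trans K2 K.
have := eqm_coef K3 (ltnSn k).
rewrite -!T_sder mulr_natr coefMn coef_poly ltnSn => HK.
rewrite mulr_natr HK.
rewrite -!natrX -!natrM !mulr_natr coefB !coefMn.
rewrite -(eqm_coef (hr r) (_ : (k < M.+2)%N)) ?coef_poly; last by rewrite ltnS leqW.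
rewrite -(eqm_coef (hr r.+2) (_ : (k < M.+2)%N)) ?coef_poly; last by rewrite ltnS leqW.
by rewrite (_ : (k < M.+2)%N) // ltnS leqW.
Qed.
Definition L (N : nat) (h : series) (p : {poly rat}) : rat :=
  \sum_(k < N) h k * k`!%:R * p`_k.

Lemma L_X N h (p : {poly rat}) : L N.+1 h ('X * p) = L N (sder h) p.
Proof.
rewrite /L big_ord_recl /= coefXM /= mulr0 add0r.
apply: eq_bigr => i _; rewrite coefXM /= /sder factS natrM; ring.
Qed.

Lemma L_widen N M h (p : {poly rat}) : (size p <= N)%N -> (N <= M)%N -> L N h p = L M h p.
Proof.
move=> sp NM; rewrite /L (big_ord_widen _ (fun k => h k * k`!%:R * p`_k) NM).
rewrite big_mkcond /=; apply: eq_bigr => i _.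
case: ifP => // /negbT; rewrite -leqNgt => Ni.
by rewrite nth_default ?mulr0 // (leq_trans sp Ni).
Qed.

Lemma L_lin N h (p q : {poly rat}) c : L N h (p - c%:P * q) = L N h p - c * L N h q.
Proof.
rewrite /L mulr_sumr -sumrB; apply: eq_bigr => i _.
rewrite coefB coefCM; ring.
Qed.

Lemma L_dd N r (p : {poly rat}) :
  L N (sder (sder (spow sS r))) p * 4%:R =
  L N (spow sS r) p * r%:R ^+ 2 - L N (spow sS r.+2) p * (r%:R * r.+1%:R).
Proof.
rewrite /L !mulr_suml -sumrB; apply: eq_bigr => i _.
have e := H_dd r i.
transitivity ((sder (sder (spow sS r)) i * 4%:R) * (i`!%:R * p`_i)); first ring.
rewrite e; ring.
Qed.

Definition Ep (n : nat) : {poly rat} := \prod_(i < n) ('X^2 - (i%:R ^+ 2)%:P).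

Lemma size_Ep n : (size (Ep n) <= (2 * n).+1)%N.
Proof.
elim: n => [|n IH]; first by rewrite /Ep big_ord0 size_poly1.
rewrite /Ep big_ord_recr /= -/(Ep n).
apply: leq_trans (size_polyMleq _ _) _.
rewrite size_XnsubC //.
move: IH; set s := size (Ep n); lia.
Qed.

Lemma Ep_S n : Ep n.+1 = 'X * ('X * Ep n) - (n%:R ^+ 2)%:P * Ep n.
Proof. rewrite /Ep big_ord_recr /=; ring. Qed.

Lemma spow0 a r : spow a r 0%N = a 0%N ^+ r.
Proof.
elim: r => [|r IH]; first by [].
by rewrite /spow iterS -/(spow a r) /smul big_ord1 subnn IH exprS.
Qed.

Definition G (r n : nat) : rat :=
  (2 * n)`!%:R / 2 ^+ (2 * n) * gbinom (- (r%:R / 2%:R)) n.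

Lemma prod_shift (r : rat) n :
  \prod_(i < n.+1) (- r - i%:R) = (- r) * \prod_(i < n) (- r - 1 - i%:R).
Proof.
rewrite big_ord_recl /= subr0; congr (_ * _); apply: eq_bigr => i _.
by rewrite /bump /= add1n -[i.+1]addn1 natrD; ring.
Qed.

Lemma G_rec' r n : G r n.+1 =
  (G r n * r%:R ^+ 2 - G r.+2 n * (r%:R * r.+1%:R)) / 4%:R - n%:R ^+ 2 * G r n.
Proof.
rewrite /G /gbinom (_ : (2 * n.+1 = (2 * n).+2)%N); last lia.
rewrite !factS !natrM !exprS.
have hs := prod_shift (r%:R / 2%:R) n.
rewrite big_ord_recr /= in hs.
rewrite big_ord_recr /=.
set B := \prod_(i < n) (- (r%:R / 2%:R) - i%:R) in hs *.
set A2 := \prod_(i < n) (- (r.+2%:R / 2%:R) - i%:R).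
have hA : A2 = \prod_(i < n) (- (r%:R / 2%:R) - 1 - i%:R).
  by apply: eq_bigr => i _; rewrite -[r.+2]addn2 natrD; field.

rewrite -hA in hs.
have hf : ((2 * n)`!%:R : rat) != 0 by rewrite pnatr_eq0 -lt0n fact_gt0.
have hf2 : (n`!%:R : rat) != 0 by rewrite pnatr_eq0 -lt0n fact_gt0.
have h2 : (2 ^+ (2 * n) : rat) != 0 by apply: expf_neq0.
have hk : (0 : rat) <= n%:R := ler0n _ _.
have hn1 : (n.+1%:R : rat) != 0 by rewrite pnatr_eq0.
have hn2 : ((2 * n).+1%:R : rat) != 0 by rewrite pnatr_eq0.
have hn3 : ((2 * n).+2%:R : rat) != 0 by rewrite pnatr_eq0.
have hn1' : (1 + n%:R : rat) != 0 by apply/negP => /eqP; lra.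
have [r0|rn0] := eqVneq r 0%N.
  subst r.
  have hB : n = 0%N \/ B = 0.
    have [n0|np] := posnP n; [by left | right].
    rewrite /B (bigD1 (Ordinal np)) //=.
    by apply/eqP; rewrite mulf_eq0; apply/orP; left; apply/eqP; ring.
  clearbody B A2; case: hB => [n0|->].
    by subst n; field; repeat (apply/andP; split); try assumption.
  by field; repeat (apply/andP; split); try assumption.
have hr : (r%:R : rat) != 0 by rewrite pnatr_eq0.
have hA2 : A2 = B * (- (r%:R / 2%:R) - n%:R) / (- (r%:R / 2%:R)).
  by rewrite hs; field.
by rewrite hA2; field; repeat (apply/andP; split); try assumption.
Qed.
Lemma main_ind n r : L (2 * n).+1 (spow sS r) (Ep n) = G r n.
Proof.
elim: n r => [|n IH] r.
  rewrite /L big_ord1 spow0 /sS /sinv /= cosh0 invr1 expr1n /Ep big_ord0.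
  rewrite coefC /= /G /gbinom big_ord0 !mul1r.
  by [].

rewrite Ep_S.
rewrite L_lin.
rewrite (_ : (2 * n.+1).+1 = (2 * n).+1.+2)%N; last lia.
rewrite !L_X -(L_widen _ (size_Ep n)); last lia.
have e := L_dd (2 * n).+1 r (Ep n).
rewrite (_ : L (2 * n).+1 (sder (sder (spow sS r))) (Ep n) =
   (L (2 * n).+1 (spow sS r) (Ep n) * r%:R ^+ 2 -
    L (2 * n).+1 (spow sS r.+2) (Ep n) * (r%:R * r.+1%:R)) / 4%:R); last first.
  by rewrite -e mulfK // pnatr_eq0.
by rewrite !IH G_rec'.
Qed.
Definition Od (m : nat) : {poly rat} :=
  \prod_(j < (2 * m).+1) ('X + (m%:R - j%:R)%:P).

Lemma Od_eq m : Od m = 'X * \prod_(i < m) ('X^2 - (i.+1%:R ^+ 2)%:P).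
Proof.
elim: m => [|m IH].
  by rewrite /Od big_ord1 big_ord0 subrr addr0 mulr1.
rewrite /Od (_ : (2 * m.+1).+1 = (2 * m).+3)%N; last lia.
rewrite big_ord_recl big_ord_recr /=.
rewrite (eq_bigr (fun j : 'I_(2 * m).+1 => 'X + (m%:R - j%:R)%:P)); last first.
  by move=> j _; rewrite /bump /= add1n -[j.+1]addn1 -[m.+1]addn1 !natrD; congr (_ + _%:P); ring.
rewrite -/(Od m) IH big_ord_recr /= /bump /= add1n.
rewrite !polyCB !polyC_natr rmorphXn /= polyC_natr.
rewrite (_ : (2 * m).+2 = m.+1 + m.+1)%N; last lia.
rewrite natrD -[m.+1]addn1 natrD; ring.
Qed.

Lemma cfact_even m : cfact (2 * m) = Ep m.
Proof.
case: m => [|m]; first by rewrite /cfact /Ep big_ord0.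
rewrite (_ : (2 * m.+1 = (2 * m).+2)%N); last lia.
rewrite /cfact big_add1 /= big_mkord.
rewrite (eq_bigr (fun j : 'I_(2 * m).+1 => 'X + (m%:R - j%:R)%:P)); last first.
  move=> j _; congr (_ + _%:P).
  rewrite (_ : (2 * m).+2 = m.+1 + m.+1)%N; last lia.
  by rewrite natrD -[j.+1]addn1 -[m.+1]addn1 !natrD; field.
rewrite -/(Od m) Od_eq /Ep big_ord_recl /=.
rewrite (eq_bigr (fun i : 'I_m => 'X^2 - (i.+1%:R ^+ 2)%:P)); last first.
  by [].
by rewrite mulr0n expr0n /= subr0 mulrA expr2.
Qed.
Definition hh (n j : nat) : rat := (2 * n).+3%:R / 2%:R - j.+1%:R.

Lemma cfact_odd n :
  cfact (2 * n + 3) = 'X * \prod_(j < (2 * n).+2) ('X + (hh n j)%:P).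
Proof.
rewrite (_ : (2 * n + 3 = (2 * n).+3)%N); last lia.
by rewrite /cfact big_add1 /= big_mkord.
Qed.

Lemma size_prodX k (c : nat -> rat) :
  (size (\prod_(j < k) ('X + (c j)%:P))%R <= k.+1)%N.
Proof.
elim: k => [|k IH]; first by rewrite big_ord0 size_poly1.
rewrite big_ord_recr /=; apply: leq_trans (size_polyMleq _ _) _.
by rewrite size_XaddC addn2 /=.
Qed.

Lemma size_cfact_odd n : (size (cfact (2 * n + 3)) <= 2 * n + 4)%N.
Proof.
rewrite cfact_odd; apply: leq_trans (size_polyMleq _ _) _.
rewrite size_polyX; have := size_prodX (2 * n).+2 (hh n).
set s := size _; lia.
Qed.

Definition Q (n : nat) : rat := \prod_(j < (2 * n).+2) (1 + hh n j).

Lemma prod_neg k (F : nat -> rat) :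
  \prod_(j < k) (- F j) = (-1) ^+ k * \prod_(j < k) F j.
Proof.
elim: k => [|k IH]; first by rewrite !big_ord0 expr0 mul1r.
by rewrite !big_ord_recr /= IH exprS; ring.
Qed.

Lemma cfact_odd_1 n : (cfact (2 * n + 3)).[1] = Q n.
Proof.
rewrite cfact_odd hornerM hornerX mul1r horner_prod.
by apply: eq_bigr => j _; rewrite hornerD hornerX hornerC.
Qed.

Lemma cfact_odd_m1 n : (cfact (2 * n + 3)).[-1] = - Q n.
Proof.
rewrite cfact_odd hornerM hornerX mulN1r horner_prod; congr (- _).
rewrite (reindex_inj rev_ord_inj) /=.
rewrite (eq_bigr (fun j : 'I_(2 * n).+2 => - (1 + hh n j))); last first.
  move=> j _; rewrite hornerD hornerX hornerC /hh.
  have jl := ltn_ord j.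
  rewrite (_ : ((2 * n).+2 - j.+1).+1 = (2 * n).+2 - j)%N; last lia.
  rewrite natrB; last lia.
  rewrite (_ : (2 * n).+3 = (2 * n).+2 + 1)%N; last lia.
  by rewrite natrD -[j.+1]addn1 natrD; field.
have e := prod_neg (2 * n).+2 (fun j => 1 + hh n j).
rewrite /= in e; rewrite e.
rewrite (_ : (-1 : rat) ^+ (2 * n).+2 = 1) ?mul1r //.
rewrite (_ : (2 * n).+2 = 2 * n.+1)%N; last lia.
by rewrite exprM sqrrN !expr1n.
Qed.
Lemma sum_split2 (f : nat -> rat) m :
  \sum_(i < 2 * m) f i = \sum_(k < m) f (2 * k)%N + \sum_(k < m) f (2 * k + 1)%N.
Proof.
elim: m => [|m IH]; first by rewrite muln0 !big_ord0 addr0.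
rewrite (_ : (2 * m.+1 = (2 * m).+2)%N); last lia.
rewrite !big_ord_recr /= IH addn1; ring.
Qed.

Lemma odd_sum n : \sum_(k < n.+2) t (2 * n + 3) (2 * k + 1) = Q n.
Proof.
set P := cfact (2 * n + 3).
have hw : (size P <= 2 * n.+2)%N by have := size_cfact_odd n; rewrite /P; lia.
have e1 := horner_coef_wide 1 hw.
have e2 := horner_coef_wide (-1) hw.
rewrite (sum_split2 (fun i => P`_i * 1 ^+ i)) in e1.
rewrite (sum_split2 (fun i => P`_i * (-1) ^+ i)) in e2.
rewrite /P cfact_odd_1 in e1; rewrite /P cfact_odd_m1 in e2.
set Ev := \sum_(k < n.+2) P`_(2 * k) in e1 e2.
set Ov := \sum_(k < n.+2) t (2 * n + 3) (2 * k + 1).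
have e1' : Q n = Ev + Ov.
  rewrite e1 /Ev /Ov /t -/P; congr (_ + _); apply: eq_bigr => i _; by rewrite expr1n mulr1.
have e2' : - Q n = Ev - Ov.
  rewrite e2 /Ev /Ov /t -/P -sumrN; congr (_ + _); apply: eq_bigr => i _.
    by rewrite exprM sqrrN !expr1n mulr1.
  by rewrite exprD exprM sqrrN !expr1n mul1r expr1 mulrN1.
lra.
Qed.
Lemma applyD_sinh n :
  applyD sinh_s (2 * n + 3) = \sum_(k < n.+2) t (2 * n + 3) (2 * k + 1).
Proof.
rewrite /applyD (_ : ((2 * n + 3).+1 = 2 * n.+2)%N); last lia.
rewrite (sum_split2 (fun k => sinh_s k * k`!%:R * t (2 * n + 3) k)).
rewrite big1 ?add0r; last first.
  by move=> i _; rewrite /sinh_s oddM /= !mul0r.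
apply: eq_bigr => i _; rewrite /sinh_s addn1 /= oddM /=.
have hf : ((2 * i).+1`!%:R : rat) != 0 by rewrite pnatr_eq0 -lt0n fact_gt0.
by rewrite mul1r mulVf // mul1r.
Qed.

Lemma Q_rec n : Q n.+1 = Q n * (n%:R + 5%:R / 2%:R) * (- (n%:R + 1 / 2%:R)).
Proof.
rewrite /Q (_ : ((2 * n.+1).+2 = (2 * n).+2.+2)%N); last lia.
rewrite big_ord_recl big_ord_recr /=.
rewrite (eq_bigr (fun j : 'I_(2 * n).+2 => 1 + hh n j)); last first.
  move=> j _; rewrite /hh /bump /= add1n.
  rewrite (_ : (2 * n.+1).+3 = (2 * n).+3 + 2)%N; last lia.
  by rewrite natrD -[j.+2]addn2 natrD; field.
rewrite /hh (_ : (2 * n.+1).+3 = (2 * n) + 5)%N; last lia.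
rewrite (_ : ((2 * n).+3).+1 = (2 * n) + 4)%N; last lia.
by rewrite !natrD; field.
Qed.

Lemma G5_rec n : G 5 n.+1 = G 5 n * (n%:R + 1 / 2%:R) * (- (n%:R + 5%:R / 2%:R)).
Proof.
rewrite /G /gbinom (_ : (2 * n.+1 = (2 * n).+2)%N); last lia.
rewrite !factS !natrM !exprS big_ord_recr /=.
have hf : ((2 * n)`!%:R : rat) != 0 by rewrite pnatr_eq0 -lt0n fact_gt0.
have hf2 : (n`!%:R : rat) != 0 by rewrite pnatr_eq0 -lt0n fact_gt0.
have h2 : (2 ^+ (2 * n) : rat) != 0 by apply: expf_neq0.
have hk : (0 : rat) <= n%:R := ler0n _ _.
have hn1' : (1 + n%:R : rat) != 0 by apply/negP => /eqP; lra.
have hn1'' : (n%:R + 1 : rat) != 0 by apply/negP => /eqP; lra.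
rewrite (_ : (2 * n).+2 = (2 * n) + 2)%N; last lia.
rewrite (_ : (2 * n).+1 = (2 * n) + 1)%N; last lia.
rewrite !natrD ?natrM -[n.+1]addn1 natrD.
by field; repeat (apply/andP; split); try assumption.
Qed.

Lemma Q_G n : 4%:R / 3%:R * Q n = G 5 n.
Proof.
elim: n => [|n IH].
  rewrite /Q /hh /G /gbinom !big_ord_recr !big_ord0 /=.
  by rewrite !muln0 /=; field.
by rewrite Q_rec G5_rec -IH; ring.
Qed.

Theorem mainTheorem8 (nu : nat) :
  applyD sech5_half (2 * nu)%N = 4%:R / 3%:R * applyD sinh_s (2 * nu + 3)%N /\
  4%:R / 3%:R * \sum_(k < nu.+2) t (2 * nu + 3) (2 * k + 1)
    = (2 * nu)`!%:R / 2 ^+ (2 * nu) * gbinom (- (5%:R / 2%:R)) nu.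
Proof.
have e1 : applyD sech5_half (2 * nu)%N = G 5 nu.
  rewrite -main_ind -cfact_even.
  by [].
have e2 : 4%:R / 3%:R * \sum_(k < nu.+2) t (2 * nu + 3) (2 * k + 1) = G 5 nu.
  by rewrite odd_sum Q_G.
split; first by rewrite e1 applyD_sinh e2.
exact: e2.
Qed.
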